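(* Let $\ell$ be an odd prime and $N\ge1$. For integers $k\ge0$ and $0\le v<\ell^N$, $$\sum_{\substack{k'\ge0\\ k'\equiv v\ (\mathrm{mod}\ \ell^N)}}(-1)^{k'}\binom{\ell^N+2k-2}{k'}\equiv\begin{cases} v+1\pmod{\ell} & (k=0)\\ 0\pmod{\ell} & (k>0).\end{cases}$$
   Context: $\binom{m}{k'}=0$ for $k'>m$. *)

(* Defs.v *)
From mathcomp Require Import all_boot all_algebra.
Set Implicit Arguments. Unset Strict Implicit. Unset Printing Implicit Defensive.
Import GRing.Theory Num.Theory.
Local Open Scope ring_scope.

(* Since C(m, k') = 0 for k' > m, the sum is restricted to 0 <= k' <= m
   (m = l^N + 2k - 2), which is exactly the infinite sum. *)
Definition alternating_binom_sum (l N k v : nat) : int :=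
  let m := (l ^ N + 2 * k - 2)%N in
  \sum_(0 <= k' < m.+1 | (k' %% l ^ N == v)%N)
     (-1) ^+ k' * ('C(m, k'))%:Z.

(* Main.v *)
Require Import Defs.
From mathcomp Require Import all_boot all_algebra.
From mathcomp Require Import ring zify.
Import GRing.Theory Num.Theory.
Local Open Scope ring_scope.

Section S.
Variable l : nat.
Hypothesis pl : prime l.
Local Notation F := ('F_l).

Definition c (m j : nat) : F := (-1) ^+ j * ('C(m, j))%:R.

Lemma cS m j : c m.+1 j.+1 = c m j.+1 - c m j.
Proof. by rewrite /c binS natrD exprS; ring. Qed.

Lemma coefP m j : ((1 - 'X : {poly F}) ^+ m)`_j = c m j.
Proof.
elim: m j => [|m IH] j.
  rewrite expr0 coef1 /c; case: j => [|j] /=; first by rewrite expr0 mulr1.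
  by have -> : 'C(0, j.+1) = 0%N by []; rewrite mulr0.
rewrite exprS mulrBl mul1r coefB coefXM IH; case: j => [|j] /=.
  by rewrite subr0 /c !bin0 !expr0.
by rewrite cS IH.
Qed.

Lemma Frob q : [pchar {poly F}].-nat q -> (1 - 'X : {poly F}) ^+ q = 1 - 'X^q.
Proof. by move=> h; rewrite exprDn_pchar // exprNn_pchar // expr1n. Qed.

Lemma natq N : [pchar {poly F}].-nat (l ^ N)%N.
Proof.
rewrite pnatX pnatE //; apply/orP; left.
by rewrite pchar_poly pchar_Fp.
Qed.

Lemma c0 m : c m 0 = 1.
Proof. by rewrite /c expr0 bin0 mul1r. Qed.

Lemma c_small m j : (m < j)%N -> c m j = 0.
Proof. by move=> h; rewrite /c bin_small // mulr0. Qed.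

Lemma cshift q r j : [pchar {poly F}].-nat q ->
  c (q + r) j = c r j - (if (j < q)%N then 0 else c r (j - q)).
Proof.
move=> hq; rewrite -!coefP exprD Frob // mulrBl mul1r coefB coefXnM.
by case: ifP.
Qed.

Lemma sum_k_pos q r v : (0 < q)%N -> [pchar {poly F}].-nat q ->
  \sum_(0 <= j < (q + r).+1 | (j %% q == v)%N) c (q + r) j = 0.
Proof.
move=> q0 hq.
under eq_bigr => j _ do rewrite cshift //.
rewrite sumrB [X in _ - X](big_cat_nat _ (n := q)) //=; last by rewrite ltnW // ltnS leq_addr.
rewrite [X in _ - (X + _)]big_nat_cond [X in _ - (X + _)]big1 ?add0r; last first.
  by move=> j /andP[/andP[_ ->]].
rewrite [X in _ - X](big_addn 0 _ q).
under [X in _ - X]eq_bigr => j _ do rewrite ltnNge leq_addl /= addnK.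
under [X in _ - X]eq_bigl => j do rewrite modnDr.
rewrite [X in X - _](big_cat_nat _ (n := r.+1)) //=; last by rewrite ltnS leq_addl.
rewrite [X in _ + X - _]big_nat_cond [X in _ + X - _]big1 ?addr0.
  by rewrite -addnS addKn subrr.
by move=> j /andP[/andP[hj _] _]; rewrite c_small.
Qed.

Lemma c_qm1 q j : (0 < q)%N -> [pchar {poly F}].-nat q -> (j < q)%N -> c q.-1 j = 1.
Proof.
move=> q0 hq; elim: j => [|j IH] hj; first by rewrite c0.
have h0 : c q j.+1 = 0.
  by rewrite -coefP Frob // coefB coef1 coefXn (ltn_eqF hj) subr0.
move: h0; rewrite -(prednK q0) cS prednK // IH ?(ltnW hj) //.
by move/eqP; rewrite subr_eq0 => /eqP.
Qed.

Lemma c_qm2 q j : (1 < q)%N -> [pchar {poly F}].-nat q -> (j < q.-1)%N ->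
  c q.-2 j = (j.+1)%:R.
Proof.
move=> q1 hq; elim: j => [|j IH] hj; first by rewrite c0.
have q0 : (0 < q)%N by apply: ltnW.
have hj1 : (j.+1 < q)%N by rewrite -(ltn_predK q1) ltnS ltnW.
have := c_qm1 q (j.+1) q0 hq hj1.
have e : q.-1 = (q.-2).+1 by move: q1; case: (q) => [|[|q2]].
rewrite e cS IH ?(ltnW hj) // => /eqP; rewrite subr_eq => /eqP ->.
by rewrite addrC natr1.
Qed.

End S.

Theorem mainTheorem12 (l N k v : nat) :
  prime l -> odd l -> (1 <= N)%N -> (v < l ^ N)%N ->
  (alternating_binom_sum l N k v ==
     (if k == 0%N then (v + 1)%:Z else 0) %[mod l%:Z])%Z.
Proof.
move=> pl lodd N1 vq.
rewrite eqz_mod_dvd (dvdz_pcharf (pchar_Fp pl)) rmorphB /= subr_eq0.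
rewrite /alternating_binom_sum rmorph_sum /=.
under eq_bigr => j _ do rewrite rmorphM rmorphXn rmorphN1 /= -pmulrn -/(c l _ j).
have hq := natq l pl N.
have q1 : (1 < l ^ N)%N.
  apply: leq_trans (prime_gt1 pl) _.
  by rewrite -{1}(expn1 l) leq_pexp2l // prime_gt0.
have q0 : (0 < l ^ N)%N by apply: ltnW.
case: k => [|k] /=.
  rewrite muln0 addn0 -pmulrn.
  rewrite big_mkcond (eq_big_nat _ _ (F2 := fun j => if j == v then c l (l ^ N - 2) j else 0)); last first.
    move=> j /andP[_ hj]; rewrite modn_small //.
    lia.
  rewrite -big_mkcond big_nat1_eq /=.
  case: ifP => hv.
    rewrite addn1 -(c_qm2 l (l ^ N)) //; first by rewrite -subn2.
    lia.
  have -> : v = (l ^ N).-1.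
    apply/eqP; rewrite eqn_leq -ltnS prednK // vq /=.
    move: hv => /negbT; lia.
  rewrite addn1 prednK // natrX (pchar_Fp_0 pl) expr0n.
  by move: N1; rewrite lt0n => /negbTE ->.
have -> : (l ^ N + 2 * k.+1 - 2 = l ^ N + 2 * k)%N by lia.
by rewrite sum_k_pos.
Qed.
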